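(* Let $\pi$ be a prior satisfying conditions (MD) and (MZ) below, and suppose moreover that the function $f$ with $\pi_\eta(\eta\mid\theta)=f(\eta'W(P)\eta\mid\theta,W(P))$ satisfies: $f(u\mid\theta,W(P))=f(u)$ for all $(W(P),\theta)$, where $f$ is strictly positive, continuous and non-increasing in $u\ge0$, and $\lim_{u\to\infty}f(au)/f(u)=0$ for every $a>1$. (MD): the conditional prior of $(Y(P),\theta)$ given $(X(P),W(P))$ is absolutely continuous with full support and a continuous density for all $(X(P),W(P))$, and for all $P,\theta$, $\pi(\theta\mid P)=h(Q_W(\theta;P),W(P),\theta)c(P)$ for some non-negative $h$ twice continuously differentiable in its first argument and continuously differentiable in $\theta$, with $c(P)$ a normalizing constant. (MZ): $\pi_\eta(\eta\mid\theta)=\pi(\eta\mid\theta,W(P),X(P))$ is strictly positive and twice continuously differentiable in $(\eta,\theta)$, does not depend on $X(P)$, satisfies $\int\eta\,\pi_\eta(\eta\mid\theta)d\eta=0$, and $(Y(P),X(P))$ can be varied freely while holding $W(P)$ fixed. For $c>0$ and any continuous density $\pi_\theta$ on $\mathbb R^p$ with $\pi_\theta(\theta_W(P))>0$, define \[ \pi_c(\theta\mid P)=\frac{\pi_\theta(\theta)\,f\bigl(\tfrac1cQ_W(\theta;P)\bigr)}{\int\pi_\theta(\vartheta)\,f\bigl(\tfrac1cQ_W(\vartheta;P)\bigr)d\vartheta}. \] Then $\pi_c(\cdot\mid P)$ concentrates on $\theta_W(P)$ as $c\to0$: for every $\varepsilon>0$, with $B_\varepsilon(\theta_W(P))=\{\theta:\|\theta-\theta_W(P)\|<\varepsilon\}$,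 \[ \lim_{c\to0}\int1\{\theta\notin B_\varepsilon(\theta_W(P))\}\,d\pi_c(\theta\mid P)=0. \]
   Context: Let $\mathcal D$ be a set and $\mathcal P$ a set of probability distributions on $\mathcal D$; $P\in\mathcal P$ is observed. Fix integers $k>p\ge1$. Let $Y:\mathcal P\to\mathbb R^k$ and $X:\mathcal P\to\mathbb R^{k\times p}$ be known functions with $X(P)$ of full column rank, and $W(P)$ a known symmetric positive definite $k\times k$ matrix. Define $g(\theta;P)=Y(P)-X(P)\theta$, $Q_W(\theta;P)=g(\theta;P)'W(P)g(\theta;P)$, and the pseudo-true value $\theta_W(P)=\arg\min_\theta Q_W(\theta;P)=(X(P)'W(P)X(P))^{-1}X(P)'W(P)Y(P)$. A prior $\pi$ is a joint distribution over $(P,\theta)\in\mathcal P\times\mathbb R^p$, with $\eta=g(\theta;P)$; $\pi(\theta\mid P)$ is the posterior density of $\theta$. Under (MD) and (MZ) the conditional prior density of $\eta$ has the form $\pi_\eta(\eta\mid\theta)=f(\eta'W(P)\eta\mid\theta,W(P))$. The posterior $\pi_c$ corresponds to the scale family of misspecification priors $\pi_{\eta,c}(\eta\mid\theta)\propto f(\tfrac1c\eta'W(P)\eta)$ with prior $\pi_\theta$ on $\theta$. *)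

(* Defs.v *)
From HB Require Import structures.
From mathcomp Require Import all_boot all_order all_algebra.
From mathcomp Require Import all_classical all_reals all_analysis.
Set Implicit Arguments. Unset Strict Implicit. Unset Printing Implicit Defensive.
Import Order.TTheory GRing.Theory Num.Theory.
Import numFieldNormedType.Exports.
Local Open Scope classical_set_scope.
Local Open Scope ring_scope.

(* Lebesgue integral over R^n of a nonnegative (extended-real valued)
   function, written as the iterated one-dimensional Lebesgue integral
   (equal to the n-dimensional Lebesgue integral by Tonelli for the
   nonnegative measurable integrands used here). *)
Fixpoint lebRn (R : realType) (n : nat) : ('cV[R]_n -> \bar R) -> \bar R :=
  match n return ('cV[R]_n -> \bar R) -> \bar R with
  | 0 => fun g => g 0
  | n'.+1 => fun g =>
      (\int[@lebesgue_measure R]_x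
         lebRn (fun v : 'cV[R]_n' => g (col_mx (x%:M : 'cV[R]_1) v)))%E
  end.

Definition enorm (R : realType) (n : nat) (v : 'cV[R]_n) : R :=
  Num.sqrt (\sum_(i < n) v i 0 ^+ 2).

Definition gmom (R : realType) (k p : nat) (Y : 'cV[R]_k) (X : 'M[R]_(k, p))
  (theta : 'cV[R]_p) : 'cV[R]_k := Y - X *m theta.

Definition QW (R : realType) (k p : nat) (Y : 'cV[R]_k) (X : 'M[R]_(k, p))
  (W : 'M[R]_k) (theta : 'cV[R]_p) : R :=
  ((gmom Y X theta)^T *m W *m gmom Y X theta) 0 0.

Definition thetaW (R : realType) (k p : nat) (Y : 'cV[R]_k) (X : 'M[R]_(k, p))
  (W : 'M[R]_k) : 'cV[R]_p :=
  invmx (X^T *m W *m X) *m (X^T *m W *m Y).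

Definition post_kernel (R : realType) (k p : nat) (Y : 'cV[R]_k)
  (X : 'M[R]_(k, p)) (W : 'M[R]_k) (f : R -> R) (pitheta : 'cV[R]_p -> R)
  (c : R) (theta : 'cV[R]_p) : R :=
  pitheta theta * f (c^-1 * QW Y X W theta).

Definition post_mass_outside (R : realType) (k p : nat) (Y : 'cV[R]_k)
  (X : 'M[R]_(k, p)) (W : 'M[R]_k) (f : R -> R) (pitheta : 'cV[R]_p -> R)
  (eps c : R) : R :=
  fine (lebRn (fun theta =>
          ((if enorm (theta - thetaW Y X W) < eps then 0 else 1)
           * post_kernel Y X W f pitheta c theta)%:E))
  / fine (lebRn (fun theta => (post_kernel Y X W f pitheta c theta)%:E)).

(* Main.v *)
Require Import Defs.
From HB Require Import structures.
From mathcomp Require Import all_boot all_order all_algebra.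
From mathcomp Require Import all_classical all_reals all_analysis.
Import Order.TTheory GRing.Theory Num.Theory.
Import numFieldNormedType.Exports.
Local Open Scope classical_set_scope.
Local Open Scope ring_scope.
From mathcomp Require Import ring lra.
Import HBNNSimple.

Section I.
Context (R : realType).
Local Open Scope ereal_scope.
Let mu := (@lebesgue_measure R).

Lemma int_mono (f g : R -> \bar R) : (forall x, 0 <= f x) -> (forall x, f x <= g x) ->
  \int[mu]_x f x <= \int[mu]_x g x.
Proof.
move=> f0 fg.
have g0 x : 0 <= g x by apply: le_trans (fg x).
rewrite !ge0_integralTE//.
apply: ereal_sup_le => _ [h /= hf <-]; exists h => //= x; exact: le_trans (hf x) (fg x).
Qed.

Lemma int_scale_le (k : R) (f : R -> \bar R) : (0 < k)%R -> (forall x, 0 <= f x) ->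
  \int[mu]_x (k%:E * f x) <= k%:E * \int[mu]_x f x.
Proof.
move=> k0 f0.
have kf0 x : 0 <= k%:E * f x by rewrite mule_ge0// lee_fin ltW.
rewrite !ge0_integralTE//.
apply: ge_ereal_sup => _ [h /= hf <-].
have ki0 : (0 <= k^-1)%R by rewrite invr_ge0 ltW.
pose h' := scale_nnsfun h ki0.
have -> : sintegral mu h = k%:E * sintegral mu h'.
  rewrite (_ : sintegral mu h' = sintegral mu (cst k^-1 \* h)%R) //.
  by rewrite sintegralrM muleA -EFinM divff ?gt_eqF// mul1e.
rewrite lee_pmul2l ?lte_fin//.
apply: ereal_sup_ubound; exists h' => //= x.
rewrite /h' /= -(@lee_pmul2l _ k%:E) ?lte_fin//.
by rewrite -EFinM mulrA divff ?gt_eqF// mul1r.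
Qed.
Lemma int_scale (k : R) (f : R -> \bar R) : (0 <= k)%R -> (forall x, 0 <= f x) ->
  \int[mu]_x (k%:E * f x) = k%:E * \int[mu]_x f x.
Proof.
move=> k0 f0; have [->|kp] := eqVneq k 0%R.
  rewrite mul0e; under eq_integral do rewrite mul0e.
  by rewrite integral0.
have k0' : (0 < k)%R by rewrite lt_neqAle eq_sym kp.
apply/eqP; rewrite eq_le int_scale_le//=.
have ki : (0 < k^-1)%R by rewrite invr_gt0.
have kf0 x : 0 <= k%:E * f x by rewrite mule_ge0// lee_fin ltW.
have := @int_scale_le k^-1 _ ki kf0.
under eq_integral do rewrite muleA -EFinM mulVf ?gt_eqF// mul1e.
move=> H; rewrite -(@lee_pmul2l _ k^-1%:E) ?lte_fin// muleA -EFinM mulVf ?gt_eqF// mul1e.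
exact: H.
Qed.
End I.

Section L.
Context (R : realType).
Local Open Scope ereal_scope.

Lemma lebRn_ge0 n (g : 'cV[R]_n -> \bar R) : (forall t, 0 <= g t) -> 0 <= lebRn g.
Proof.
elim: n g => [|n IH] g g0 /=; first exact: g0.
by apply: integral_ge0 => x _; apply: IH.
Qed.

Lemma lebRn_mono n (g h : 'cV[R]_n -> \bar R) : (forall t, 0 <= g t) ->
  (forall t, g t <= h t) -> lebRn g <= lebRn h.
Proof.
elim: n g h => [|n IH] g h g0 gh /=; first exact: gh.
apply: int_mono => x; first by apply: lebRn_ge0.
by apply: IH.
Qed.

Lemma lebRn_scale n (k : R) (g : 'cV[R]_n -> \bar R) : (0 <= k)%R -> (forall t, 0 <= g t) ->
  lebRn (fun t => k%:E * g t) = k%:E * lebRn g.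
Proof.
elim: n g => [|n IH] g k0 g0 //=.
under eq_integral do rewrite IH//.
by rewrite int_scale// => x; apply: lebRn_ge0.
Qed.

Definition box n (c : 'cV[R]_n) (s : R) (t : 'cV[R]_n) : R :=
  (\prod_(i < n) (if `|t i 0 - c i 0| < s then 1 else 0))%R.

Arguments box {n}.
Lemma lebRn_box n (c : 'cV[R]_n) (s a : R) : (0 < s)%R -> (0 <= a)%R ->
  lebRn (fun t : 'cV[R]_n => (a * box c s t)%:E) = (a * (2 * s) ^+ n)%:E.
Proof.
elim: n c a => [|n IH] c a s0 a0 /=.
  by rewrite /box big_ord0 expr0.
transitivity (\int[lebesgue_measure]_x ((a * (2 * s) ^+ n)%:E * (\1_(`]c ord0 ord0 - s, c ord0 ord0 + s[%classic : set R) x)%:E)).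
  apply: eq_integral => x _.
  transitivity (lebRn (fun v : 'cV[R]_n => ((a * (if `|x - c ord0 ord0| < s then 1 else 0)) * box (\col_i c (lift ord0 i) ord0) s v)%:E)).
    congr lebRn; apply: funext => v; congr (_%:E).
    rewrite /box big_ord_recl mulrA.
    have E0 : col_mx (x%:M : 'cV[R]_1) v ord0 ord0 = x.
      have -> : (ord0 : 'I_n.+1) = lshift n (ord0 : 'I_1) by apply: val_inj.
      by rewrite col_mxEu mxE eqxx mulr1n.
    have E1 i : col_mx (x%:M : 'cV[R]_1) v (lift ord0 i) ord0 = v i ord0.
      have -> : lift (ord0 : 'I_n.+1) i = rshift 1 i by apply: val_inj.
      by rewrite col_mxEd.
    rewrite E0.
    congr (_ * _)%R; last by apply: eq_bigr => i _; rewrite E1 mxE.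
  rewrite IH//; last by case: ifP; rewrite ?mulr1 ?mulr0.
  rewrite -EFinM; congr (_%:E).
  rewrite indicE mulrAC; congr (_ * _)%R.
  rewrite ltr_distl; case: ifPn => H; [rewrite mem_set|rewrite memNset] => //=; rewrite in_itv/= ?H//; exact/negP.
rewrite int_scale//; last by rewrite mulr_ge0// exprn_ge0// mulr_ge0// ltW.
rewrite integral_indic// setIT.
have := @lebesgue_measure_itv R (`]c ord0 ord0 - s, c ord0 ord0 + s[)%R. rewrite /= => ->. rewrite ifT; last first.
  by rewrite lte_fin; lra.
rewrite -EFinD -EFinM; congr (_%:E).
rewrite exprS; lra.
Qed.
End L.

Set Implicit Arguments. Unset Strict Implicit.

Section M.
Context (R : realType).

Definition qf n (A : 'M[R]_n) (u v : 'cV[R]_n) : R := (u^T *m A *m v) 0 0.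
Arguments qf {n}.

Lemma eD m n (B C : 'M[R]_(m, n)) i j : (B + C) i j = B i j + C i j.
Proof. by rewrite mxE. Qed.
Lemma eN m n (B : 'M[R]_(m, n)) i j : (- B) i j = - B i j.
Proof. by rewrite mxE. Qed.
Lemma eZ m n a (B : 'M[R]_(m, n)) i j : (a *: B) i j = a * B i j.
Proof. by rewrite mxE. Qed.
Lemma eT m n (B : 'M[R]_(m, n)) i j : B^T j i = B i j.
Proof. by rewrite mxE. Qed.

Lemma qf_sym n (A : 'M[R]_n) u v : A^T = A -> qf A u v = qf A v u.
Proof.
move=> hA; rewrite /qf -eT !trmx_mul trmxK hA mulmxA.
by congr (_ _ _); apply: val_inj.
Qed.

Lemma qfBl n (A : 'M[R]_n) u1 u2 v : qf A (u1 - u2) v = qf A u1 v - qf A u2 v.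
Proof. by rewrite /qf linearB /= !mulmxBl eD eN. Qed.
Lemma qfBr n (A : 'M[R]_n) u v1 v2 : qf A u (v1 - v2) = qf A u v1 - qf A u v2.
Proof. by rewrite /qf !mulmxBr eD eN. Qed.
Lemma qfZl n (A : 'M[R]_n) a u v : qf A (a *: u) v = a * qf A u v.
Proof. by rewrite /qf linearZ /= -!scalemxAl eZ. Qed.
Lemma qfZr n (A : 'M[R]_n) a u v : qf A u (a *: v) = a * qf A u v.
Proof. by rewrite /qf -!scalemxAr eZ. Qed.

Lemma qf_expand n (A : 'M[R]_n) u v t : A^T = A ->
  qf A (u - t *: v) (u - t *: v) = qf A u u - 2 * t * qf A u v + t ^+ 2 * qf A v v.
Proof.
move=> hA; rewrite !(qfBl, qfBr, qfZl, qfZr) (@qf_sym n A u v hA); ring.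
Qed.

Lemma qf_mul m n (A : 'M[R]_m) (X : 'M[R]_(m, n)) u v :
  qf A (X *m u) (X *m v) = qf (X^T *m A *m X) u v.
Proof. by rewrite /qf trmx_mul !mulmxA. Qed.

Lemma qf_id n (u v : 'cV[R]_n) : qf 1%:M u v = \sum_i u i 0 * v i 0.
Proof.
rewrite /qf mulmx1 !mxE; apply: eq_bigr => i _; rewrite mxE.
by congr (_ * _); congr (_ _ _); apply: val_inj; rewrite /= ?ord1.
Qed.


Lemma qf_bound n (A : 'M[R]_n) d :
  `|qf A d d| <= (\sum_j \sum_i `|A i j|) * qf 1%:M d d.
Proof.
have S0 : 0 <= qf 1%:M d d by rewrite qf_id sumr_ge0// => i _; rewrite -expr2 sqr_ge0.
have Si (i : 'I_n) : d i 0 ^+ 2 <= qf 1%:M d d.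
  rewrite qf_id (bigD1 i) //= -expr2 lerDl; apply: sumr_ge0 => l _; by rewrite -expr2 sqr_ge0.
have Sij (a b : 'I_n) : `|d a 0| * `|d b 0| <= qf 1%:M d d.
  have [ab|ba] := leP `|d a 0| `|d b 0|.
    apply: le_trans (Si b); rewrite -real_normK ?num_real// expr2.
    by rewrite ler_wpM2r.
  apply: le_trans (Si a); rewrite -real_normK ?num_real// expr2.
  by rewrite ler_wpM2l// ltW.
rewrite /qf mxE big_distrl /=.
apply: le_trans (ler_norm_sum _ _ _) _.
apply: ler_sum => j _.
rewrite mxE big_distrl /= big_distrl /=.
apply: le_trans (ler_norm_sum _ _ _) _.
apply: ler_sum => i _.
rewrite mxE !normrM mulrAC mulrC.
by rewrite ler_wpM2l.
Qed.

End M.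

Section Model.
Context (R : realType) (k p : nat) (Y : 'cV[R]_k) (X : 'M[R]_(k, p)) (W : 'M[R]_k).
Hypothesis hX : \rank X = p.
Hypothesis hW : W^T = W.
Hypothesis hpd : forall v : 'cV[R]_k, v != 0 -> 0 < (v^T *m W *m v) 0 0.

Let M := X^T *m W *m X.
Let tW := thetaW Y X W.
Let gW := Y - X *m tW.

Lemma psdW v : 0 <= qf W v v.
Proof.
have [->|v0] := eqVneq v 0; last exact/ltW/hpd.
by rewrite /qf mulmx0 mxE.
Qed.

Lemma Msym : M^T = M.
Proof. by rewrite /M !trmx_mul trmxK hW mulmxA. Qed.

Lemma Xinj (d : 'cV[R]_p) : X *m d = 0 -> d = 0.
Proof.
have Xf : row_full X by rewrite /row_full hX.
by move=> h; apply: (@row_full_inj _ _ _ 1 X Xf); rewrite /= h mulmx0.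
Qed.

Lemma Mker (d : 'cV[R]_p) : M *m d = 0 -> d = 0.
Proof.
move=> h; apply: Xinj; apply/eqP; apply: contraT => nz.
have := hpd nz; rewrite -[(_ *m _ *m _) 0 0]/(qf W _ _) qf_mul -/M /qf -mulmxA h mulmx0 mxE.
by rewrite ltxx.
Qed.

Lemma Munit : M \in unitmx.
Proof.
rewrite -row_free_unit; apply: inj_row_free => v h.
have : M *m v^T = 0 by rewrite -Msym -trmx_mul h trmx0.
by move/Mker => /(congr1 trmx); rewrite trmxK trmx0.
Qed.

Lemma normal_eq : X^T *m W *m gW = 0.
Proof.
rewrite /gW mulmxBr mulmxA -/M /tW /thetaW mulmxA mulmxV ?Munit// mul1mx.
by rewrite subrr.
Qed.

Lemma cross0 (v : 'cV[R]_p) : qf W gW (X *m v) = 0.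
Proof.
rewrite qf_sym// /qf trmx_mul.
rewrite -(mulmxA v^T) -(mulmxA v^T) normal_eq.
by rewrite !mulmx0 mxE.
Qed.

Lemma Q_decomp theta :
  QW Y X W theta = qf W gW gW + qf M (theta - tW) (theta - tW).
Proof.
rewrite /QW -/(qf W (gmom Y X theta) (gmom Y X theta)).
have -> : gmom Y X theta = gW - 1 *: (X *m (theta - tW)).
  by rewrite scale1r /gmom /gW mulmxBr opprB addrA subrK.
rewrite qf_expand// cross0 qf_mul -/M.
by rewrite mulr0 subr0 expr1n mul1r.
Qed.

Lemma M_lower (d : 'cV[R]_p) : qf 1%:M d d <= qf M d d * (1 + \sum_j \sum_i `|(invmx M)^T i j|).
Proof.
set C := \sum_j \sum_i _.
have C0 : 0 <= C by apply: sumr_ge0 => j _; apply: sumr_ge0 => i _.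
set b := invmx M *m d.
have Mb : M *m b = d by rewrite /b mulmxA mulmxV ?Munit// mul1mx.
have e1 : qf M d b = qf 1%:M d d by rewrite /qf -mulmxA Mb mulmx1.
have e2 : qf M b b = qf (invmx M)^T d d.
  by rewrite /qf -mulmxA Mb /b trmx_mul.
have hb := qf_bound (invmx M)^T d.
have ps t : 0 <= qf M (d - t *: b) (d - t *: b).
  by rewrite /M -qf_mul psdW.
set S := qf 1%:M d d; set q := qf M d d.
have S0 : 0 <= S by rewrite /S qf_id sumr_ge0// => i _; rewrite -expr2 sqr_ge0.
have := ps (1 + C)^-1; rewrite qf_expand ?Msym// e1 e2 -/S -/q.
set t := (1 + C)^-1.
have t0 : 0 < t by rewrite invr_gt0; lra.
have tC : t * (1 + C) = 1 by rewrite mulVf //; lra.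
have hb' : qf (invmx M)^T d d <= C * S by apply: le_trans (ler_norm _) hb.
move: hb'; set r := qf _ d d => hb' H.
have H2 : 0 <= q - 2 * t * S + t * (t * (C * S)).
  apply: le_trans H _; rewrite lerD2l expr2 -mulrA !ler_pM2l//.
have H3 := mulr_ge0 H2 (_ : 0 <= 1 + C).
have E : (q - 2*t*S + t*(t*(C*S)))*(1+C) = q*(1+C) - 2*S*(t*(1+C)) + t*(C*S)*(t*(1+C)) by ring.
rewrite E tC !mulr1 in H3.
have H4 : t * (C * S) <= S.
  rewrite mulrA -[S in _ <= S]mul1r ler_wpM2r//.
  have : t * C = 1 - t by rewrite -tC; ring.
  move=> ->; lra.
have := H3 ltac:(lra); lra.
Qed.

End Model.

Lemma cont_box (R : realType) p (g : 'cV[R]_p -> R) (t0 : 'cV[R]_p) :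
  continuous g -> 0 < g t0 ->
  exists2 e : R, 0 < e & forall t : 'cV[R]_p, (forall i, `|t i 0 - t0 i 0| < e) -> g t0 / 2 < g t.
Proof.
move=> gc g0.
have := gc t0 => /cvgrPdist_lt /(_ (g t0 / 2)) /(_ ltac:(lra)).
case/nbhs_ballP => e e0 H.
exists e => // t ht.
have : ball t0 e t.
  split => // i j; rewrite (ord1 j).
  by rewrite /ball /= distrC.
move=> /H; rewrite ltr_distlC => /andP[h _]; lra.
Qed.

Lemma lim_ratio (R : realType) (f : R -> R) (A B m : R) :
  0 < B -> B < A -> 0 < m ->
  (forall a, 1 < a -> (fun u => f (a * u) / f u) @ +oo --> 0) ->
  (fun c => f (c^-1 * A) / (m * f (c^-1 * B))) @ 0^'+ --> 0.
Proof.
move=> B0 BA m0 H.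
set a := A / B.
have a1 : 1 < a by rewrite /a ltr_pdivlMr// mul1r.
have hB : (fun c : R => c^-1 * B) @ 0^'+ --> +oo.
  apply/gtr0_cvgV0.
    near=> c; rewrite mulr_gt0// invr_gt0; near: c; exact: nbhs_right_gt.
  have -> : unstable.inv_fun (fun c : R => c^-1 * B) = (fun c => c * B^-1).
    by apply: funext => c /=; rewrite /unstable.inv_fun invfM invrK.
  rewrite -[X in _ --> X](mul0r B^-1); apply: cvgMl.
  by apply: (@cvg_at_right_filter R R id 0); exact: cvg_id.
have := cvg_comp _ _ hB (H a a1).
move=> /(@cvgMl_tmp _ _ _ (at_right_proper_filter 0) _ m^-1); rewrite mulr0.
suff -> : (fun c => f (c^-1 * A) / (m * f (c^-1 * B))) =
  (fun x => m^-1 * ((fun u => f (a * u) / f u) \o (fun c : R => c^-1 * B)) x) by [].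
apply: funext => c /=.
have -> : a * (c^-1 * B) = c^-1 * A.
  by rewrite /a mulrCA -mulrA mulVf ?gt_eqF// mulr1 mulrC.
by rewrite invfM mulrCA mulrA.
Unshelve. all: by end_near.
Qed.

Theorem proposition2 (R : realType) (k p : nat)
  (Y : 'cV[R]_k) (X : 'M[R]_(k, p)) (W : 'M[R]_k)
  (f : R -> R) (pitheta : 'cV[R]_p -> R) :
  (1 <= p)%N -> (p < k)%N ->
  \rank X = p ->
  W^T = W ->
  (forall v : 'cV[R]_k, v != 0 -> 0 < (v^T *m W *m v) 0 0) ->
  (forall u, 0 <= u -> 0 < f u) ->
  {within `[0, +oo[, continuous f} ->
  (forall u v, 0 <= u -> u <= v -> f v <= f u) ->
  (forall a, 1 < a -> (fun u => f (a * u) / f u) @ +oo --> 0) ->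
  continuous pitheta ->
  (forall theta, 0 <= pitheta theta) ->
  lebRn (fun theta => (pitheta theta)%:E) = 1%E ->
  0 < pitheta (thetaW Y X W) ->
  forall eps, 0 < eps ->
    post_mass_outside Y X W f pitheta eps c @[c --> 0^'+] --> 0.
Proof.
move=> p1 pk hX hW hpd fpos _ fmono flim pcont p0 pint ppos eps eps0.
set tW := thetaW Y X W.
set M := X^T *m W *m X.
set gW := Y - X *m tW.
set Q0 := qf W gW gW.
have Q00 : 0 <= Q0 by apply: psdW.
set C := \sum_j \sum_i `|(invmx M)^T i j|.
have C0 : 0 <= C by apply: sumr_ge0 => j _; apply: sumr_ge0 => i _.
set CM := \sum_j \sum_i `|M i j|.
have CM0 : 0 <= CM by apply: sumr_ge0 => j _; apply: sumr_ge0 => i _.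
set e2 := eps ^+ 2 / (1 + C).
have e20 : 0 < e2 by rewrite divr_gt0 ?exprn_gt0//; lra.
set A := Q0 + e2.
set B := Q0 + e2 / 2.
have QW0 theta : 0 <= QW Y X W theta by apply: psdW.
have Qdec theta : QW Y X W theta = Q0 + qf M (theta - tW) (theta - tW).
  exact: Q_decomp.
have Hout theta : ~~ (enorm (theta - tW) < eps) -> A <= QW Y X W theta.
  rewrite -leNgt Qdec /A lerD2l => hn.
  set d := theta - tW.
  have hS : eps ^+ 2 <= qf 1%:M d d.
    rewrite qf_id; move: hn; rewrite /enorm.
    under eq_bigr do rewrite expr2.
    move=> hn; have := ler_pM (ltW eps0) (ltW eps0) hn hn.
    by rewrite -!expr2 sqr_sqrtr// sumr_ge0// => i _; rewrite -expr2 sqr_ge0.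
  have := M_lower hX hW hpd d; rewrite -/M -/C => hl.
  by rewrite /e2 ler_pdivrMr ?(le_trans hS)//; lra.
have [de de0 Hde] := cont_box pcont ppos.
set K := CM * p%:R + 1.
have K1 : 1 <= K by rewrite /K lerDr mulr_ge0.
set s2 := e2 / (2 * K).
have s20 : 0 < s2 by rewrite /s2 divr_gt0//; lra.
set s := Num.min de (Num.min 1 s2).
have s0 : 0 < s by rewrite /s !lt_min de0 s20 ltr01.
have sde : s <= de by rewrite /s ge_min lexx.
have s1 : s <= 1 by rewrite /s !ge_min lexx orbT.
have ss2 : s <= s2 by rewrite /s !ge_min lexx !orbT.
have Hbox (theta : 'cV[R]_p) : (forall i, `|theta i 0 - tW i 0| < s) ->
    QW Y X W theta <= B /\ pitheta tW / 2 < pitheta theta.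
  move=> hb; split; last first.
    by apply: Hde => i; apply: lt_le_trans (hb i) sde.
  rewrite Qdec /B lerD2l.
  set d := theta - tW.
  have hS : qf 1%:M d d <= p%:R * (s * s).
    rewrite qf_id mulr_natl (_ : (s * s) *+ p = \sum_(i < p) (s * s)); last by rewrite sumr_const card_ord.
    apply: ler_sum => i _.
    have hi := hb i.
    have -> : d i 0 = theta i 0 - tW i 0 by rewrite !mxE.
    rewrite -expr2 -real_normK ?num_real// expr2.
    by apply: ler_pM; rewrite ?normr_ge0 ?ltW.
  have hq := le_trans (ler_norm _) (qf_bound M d); rewrite -/CM in hq.
  apply: le_trans hq _.
  have h1 : CM * qf 1%:M d d <= CM * (p%:R * s) .
    apply: ler_wpM2l => //; apply: le_trans hS _.
    apply: ler_wpM2l => //.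
    by rewrite -[X in _ <= X]mulr1; apply: ler_wpM2l; [exact: ltW|exact: s1].
  apply: le_trans h1 _.
  have h2 : CM * (p%:R * s) <= K * s.
    by rewrite mulrA /K mulrDl mul1r lerDl ltW.
  apply: le_trans h2 _.
  have h3 : K * s <= K * s2 by rewrite ler_wpM2l //; lra.
  apply: le_trans h3 _.
  have KE : K * s2 = e2 / 2.
    by rewrite /s2; field; rewrite gt_eqF//; lra.
  by rewrite KE.
set m := pitheta tW / 2 * (2 * s) ^+ p.
have m0 : 0 < m by rewrite /m mulr_gt0 ?exprn_gt0//; lra.
have B0 : 0 < B by rewrite /B; lra.
have BA : B < A by rewrite /B /A; lra.
have hlim := lim_ratio B0 BA m0 flim.
apply: (@squeeze_cvgr _ _ _ _ (fun _ => 0) (fun c => f (c^-1 * A) / (m * f (c^-1 * B)))); last 2 first.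
- exact: cvg_cst.
- exact: hlim.
near=> c.
have c0 : 0 < c by near: c; exact: nbhs_right_gt.
have ci0 : 0 <= c^-1 by rewrite invr_ge0 ltW.
have kern0 theta : 0 <= post_kernel Y X W f pitheta c theta.
  by rewrite /post_kernel mulr_ge0// ltW// fpos// mulr_ge0.
rewrite /post_mass_outside.
set Nn := lebRn _; set Dd := lebRn _.
have hDlo : (((pitheta tW / 2 * f (c^-1 * B)) * (2 * s) ^+ p)%:E <= Dd)%E.
  rewrite -(@lebRn_box R p tW s)//; last by rewrite mulr_ge0 ?ltW ?fpos ?mulr_ge0//; lra.
  apply: lebRn_mono => theta.
    rewrite lee_fin; apply: mulr_ge0; last by apply: prodr_ge0 => i _; case: ifP.
    apply: mulr_ge0; first lra.
    by apply/ltW/fpos/mulr_ge0 => //; lra.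
  rewrite lee_fin /post_kernel.
  case: (boolP [forall i, `|theta i 0 - tW i 0| < s]).
    move/forallP => hb.
    rewrite /box big1 ?mulr1 => [|i _]; last by rewrite ifT.
    have [hQ hpi] := Hbox theta hb.
    apply: ler_pM.
    - lra.
    - by apply/ltW/fpos/mulr_ge0 => //; lra.
    - exact: ltW.
    - apply: fmono; first by rewrite mulr_ge0.
      by rewrite ler_wpM2l.
  move/forallPn => [i hi].
  rewrite /box (bigD1 i)//= ifN// mul0r mulr0.
  exact: kern0.
have hDhi : (Dd <= (f 0)%:E)%E.
  have := @lebRn_scale R p (f 0) (fun theta => (pitheta theta)%:E).
  rewrite pint mule1 => <- //; last by rewrite ltW// fpos.
  apply: lebRn_mono => theta; first by rewrite lee_fin kern0.
  rewrite -EFinM lee_fin /post_kernel mulrC ler_wpM2r//.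
  by apply: fmono => //; rewrite mulr_ge0.
have hNhi : (Nn <= (f (c^-1 * A))%:E)%E.
  have := @lebRn_scale R p (f (c^-1 * A)) (fun theta => (pitheta theta)%:E).
  rewrite pint mule1 => <- //; last by rewrite ltW// fpos// mulr_ge0//; lra.
  apply: lebRn_mono => theta.
    by rewrite lee_fin mulr_ge0//; case: ifP.
  rewrite -EFinM lee_fin.
  case: ifPn => hn; first by rewrite mul0r mulr_ge0// ltW// fpos// mulr_ge0//; lra.
  rewrite mul1r /post_kernel mulrC ler_wpM2r//.
  apply: fmono; first by rewrite mulr_ge0//; lra.
  by rewrite ler_wpM2l// Hout.
have hNlo : (0 <= Nn)%E.
  by apply: lebRn_ge0 => theta; rewrite lee_fin mulr_ge0//; case: ifP.
have fB0 : 0 < f (c^-1 * B) by apply: fpos; rewrite mulr_ge0//; lra.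
have val0 : 0 < pitheta tW / 2 * f (c^-1 * B) * (2 * s) ^+ p.
  by rewrite !mulr_gt0// ?exprn_gt0//; lra.
have Dfin : Dd \is a fin_num.
  rewrite ge0_fin_numE; first exact: le_lt_trans hDhi (ltry _).
  by apply: le_trans hDlo; rewrite lee_fin ltW.
have Nfin : Nn \is a fin_num.
  by rewrite ge0_fin_numE//; exact: le_lt_trans hNhi (ltry _).
rewrite -(fineK Dfin) -(fineK Nfin) !lee_fin in hDlo hDhi hNhi hNlo.
have fD0 : 0 < fine Dd by apply: lt_le_trans hDlo.
apply/andP; split; first by rewrite divr_ge0// ltW.
have fA0 : 0 < f (c^-1 * A) by apply: fpos; rewrite mulr_ge0//; lra.
apply: (@le_trans _ _ (f (c^-1 * A) / fine Dd)).
  by apply: ler_wpM2r => //; rewrite invr_ge0 ltW.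
apply: ler_wpM2l; first exact: ltW.
have mE : m * f (c^-1 * B) = pitheta tW / 2 * f (c^-1 * B) * (2 * s) ^+ p.
  by rewrite /m; ring.
rewrite lef_pV2 ?posrE ?mE//.
Unshelve. all: by end_near.
Qed.
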